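(* Let $d>2$ and let $H$ be a $d\times d$ complex Hadamard matrix whose dephased form has an ER pair of columns or an ER pair of rows. Then $H$ is not isolated; that is, $H$ belongs to a continuous one-parameter family of complex Hadamard matrices containing matrices inequivalent to $H$.
   Context: A $d\times d$ complex Hadamard matrix has unimodular entries and pairwise orthogonal columns. Two complex Hadamard matrices $H_1,H_2$ are equivalent if $H_2=D_1P_1H_1P_2D_2$ for diagonal unitary $D_1,D_2$ and permutation matrices $P_1,P_2$. The dephased form of $H$ is the unique matrix $H'=D_1HD_2$ ($D_1,D_2$ diagonal unitary) whose first row and first column consist of $1$'s. Two distinct columns $C_A,C_B$ form an ER pair if $\overline{(C_A)_j}(C_B)_j\in\{1,-1\}$ for all $j$; ER pairs of rows are defined analogously. A complex Hadamard matrix is isolated if it does not belong to any continuous family of (pairwise inequivalent) complex Hadamard matrices. *)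

(* Defs.v *)
From HB Require Import structures.
From mathcomp Require Import all_boot all_order all_algebra.
From mathcomp Require Import fingroup perm.
From mathcomp Require Import complex.
From mathcomp Require Import all_classical all_reals topology normedtype.
Import numFieldNormedType.Exports.
Set Implicit Arguments. Unset Strict Implicit. Unset Printing Implicit Defensive.
Import Order.TTheory GRing.Theory Num.Theory.
Local Open Scope ring_scope.

Section Hadamard.
Variable R : realType.
Local Notation C := R[i].

Definition complex_hadamard (d : nat) (H : 'M[C]_d) : Prop :=
  (forall i j, `|H i j| = 1) /\
  (forall a b : 'I_d, a != b -> \sum_(k < d) conjc (H k a) * H k b = 0).

(* a diagonal unitary matrix is diag_mx u with unimodular entries u *)
Definition unimodular_row (d : nat) (u : 'rV[C]_d) : Prop :=
  forall i, `|u 0 i| = 1.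

Definition hadamard_equiv (d : nat) (H1 H2 : 'M[C]_d) : Prop :=
  exists (u v : 'rV[C]_d) (s1 s2 : 'S_d),
    [/\ unimodular_row u, unimodular_row v &
        H2 = diag_mx u *m perm_mx s1 *m H1 *m perm_mx s2 *m diag_mx v].

Definition dephased_form (d : nat) (H H' : 'M[C]_d) : Prop :=
  (exists u v : 'rV[C]_d,
      [/\ unimodular_row u, unimodular_row v & H' = diag_mx u *m H *m diag_mx v])
  /\ (forall i j : 'I_d, (val i = 0)%N \/ (val j = 0)%N -> H' i j = 1).

Definition ER_pair_cols (d : nat) (H : 'M[C]_d) (a b : 'I_d) : Prop :=
  a != b /\ forall j, conjc (H j a) * H j b = 1 \/ conjc (H j a) * H j b = -1.

Definition ER_pair_rows (d : nat) (H : 'M[C]_d) (a b : 'I_d) : Prop :=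
  a != b /\ forall j, conjc (H a j) * H b j = 1 \/ conjc (H a j) * H b j = -1.

Definition not_isolated (d : nat) (H : 'M[C]_d) : Prop :=
  exists F : R -> 'M[C]_d,
    [/\ forall i j, continuous (fun t : R => complex.Re (F t i j)),
        forall i j, continuous (fun t : R => complex.Im (F t i j)),
        F 0 = H,
        forall t, complex_hadamard (F t) &
        exists t, ~ hadamard_equiv (F t) H].

End Hadamard.

(* Main.v *)
Require Import Defs.
From HB Require Import structures.
From mathcomp Require Import all_boot all_order all_algebra.
From mathcomp Require Import fingroup perm.
From mathcomp Require Import complex.
From mathcomp Require Import all_classical all_reals topology normedtype.
From mathcomp Require Import ring lra zify.
From Stdlib Require Import Classical_Prop.
Import numFieldNormedType.Exports.
Import Order.TTheory GRing.Theory Num.Theory.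
Local Open Scope ring_scope.



Definition xr {R : realType} (t : R) : R := (1 - t ^+ 2) / (1 + t ^+ 2).
Definition yr {R : realType} (t : R) : R := (2 * t) / (1 + t ^+ 2).
Definition zt {R : realType} (t : R) : R[i] := Complex (xr t) (yr t).

Lemma den_neq0 {R : realType} (t : R) : 1 + t ^+ 2 != 0.
Proof. by rewrite gt_eqF // ltr_pwDl // sqr_ge0. Qed.
Lemma sq_cont {R : realType} (t : R) : {for t, continuous (fun t : R => t ^+ 2)}.
Proof. exact: (continuousM (s := id) (t := id) cvg_id cvg_id). Qed.
Lemma den_cont {R : realType} (t : R) : {for t, continuous (fun t : R => (1 + t ^+ 2)^-1)}.
Proof.
have h2 := continuousD (f := fun=> 1 : R) (g := fun t : R => t ^+ 2) (x := t) (@cst_continuous R R 1 t) (sq_cont t).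
exact: (continuousV (s := fun t : R => 1 + t ^+ 2) (den_neq0 t) h2).
Qed.
Lemma xr_cont {R : realType} : continuous (@xr R).
Proof.
move=> t.
have h1 := continuousB (f := fun=> 1 : R) (g := fun t : R => t ^+ 2) (x := t) (@cst_continuous R R 1 t) (sq_cont t).
exact: (continuousM h1 (den_cont t)).
Qed.
Lemma yr_cont {R : realType} : continuous (@yr R).
Proof.
move=> t.
have h1 := continuousM (s := fun=> 2 : R) (t := id) (x := t) (@cst_continuous R R 2 t) cvg_id.
exact: (continuousM h1 (den_cont t)).
Qed.

Lemma conjc_mul_self {R : realType} (z : R[i]) : conjc z * z = `|z| ^+ 2.
Proof.
rewrite -add_Re2_Im2; case: z => x y /=.
apply/eqP; rewrite eq_complex /=; apply/andP; split; apply/eqP; ring.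
Qed.

Lemma zt_unit {R : realType} (t : R) : conjc (zt t) * zt t = 1.
Proof.
rewrite /zt /xr /yr /=.
have h := den_neq0 t.
apply/eqP; rewrite eq_complex /=; apply/andP; split; apply/eqP; field; exact h.
Qed.

Lemma zt0 {R : realType} : zt (0 : R) = 1.
Proof. apply/eqP; rewrite eq_complex /xr /yr /=; apply/andP; split; apply/eqP.
 - by rewrite /xr expr2 mulr0 subr0 addr0 divr1.
 - by rewrite /yr mulr0 mul0r.
Qed.

Lemma zt_inj_nat {R : realType} (n m : nat) : zt (n%:R : R) = zt m%:R -> n = m.
Proof.
move=> /(congr1 (@complex.Re R)) /=; rewrite /xr.
have h1 := den_neq0 (n%:R : R); have h2 := den_neq0 (m%:R : R).
move=> e.
have e2 : ((n%:R : R) ^+ 2 = m%:R ^+ 2).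
  move/eqP: e; rewrite eqr_div // => /eqP e'; nra.
move/eqP: e2; rewrite -!natrX eqr_nat => /eqP e3.
by apply/eqP; rewrite -(eqn_exp2r n m (isT : 0 < 2)%N) e3.
Qed.





Lemma unim {R : realType} {z : R[i]} : `|z| = 1 -> conjc z * z = 1.
Proof. by move=> h; rewrite conjc_mul_self h expr1n. Qed.

Definition lam {R : realType} {d : nat} (M : 'M[R[i]]_d) (i j k l : 'I_d) :=
  M i j * conjc (M k j) * M k l * conjc (M i l).

Lemma equiv_entry {R : realType} (d : nat) (M : 'M[R[i]]_d) u v (s1 s2 : 'S_d) i j :
  (diag_mx u *m perm_mx s1 *m M *m perm_mx s2 *m diag_mx v) i j
  = u 0 i * M (s1 i) ((s2^-1)%g j) * v 0 j.
Proof.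
rewrite -(mulmxA (diag_mx u)) -row_permE.
have -> : perm_mx s2 = perm_mx ((s2^-1)^-1)%g by rewrite invgK.
rewrite -(mulmxA (diag_mx u)) -col_permE mul_mx_diag mxE mul_diag_mx !mxE.
by [].
Qed.

Lemma equiv_lam {R : realType} (d : nat) (M1 M2 : 'M[R[i]]_d) :
  hadamard_equiv M1 M2 ->
  exists s t : 'S_d, forall i j k l,
    lam M2 i j k l = lam M1 (s i) (t j) (s k) (t l).
Proof.
case=> u [v] [s1] [s2] [hu hv ->].
exists s1, (s2^-1)%g => i j k l; rewrite /lam !equiv_entry !rmorphM /=.
have ui := unim (hu i); have uk := unim (hu k).
have vj := unim (hv j); have vl := unim (hv l).
set A := M1 _ _; set B := M1 _ _; set C := M1 _ _; set D := M1 _ _.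
transitivity ((conjc (u 0 i) * u 0 i) * (conjc (u 0 k) * u 0 k) *
   (conjc (v 0 j) * v 0 j) * (conjc (v 0 l) * v 0 l) *
   (A * conjc B * C * conjc D)); first by ring.
by rewrite ui uk vj vl !mul1r.
Qed.



Lemma fam_ni {R : realType} (d : nat) (H : 'M[R[i]]_d) (F : R -> 'M[R[i]]_d)
  (i j k l : 'I_d) (w : R[i]) :
  (forall a b, continuous (fun t : R => complex.Re (F t a b))) ->
  (forall a b, continuous (fun t : R => complex.Im (F t a b))) ->
  F 0 = H -> (forall t, complex_hadamard (F t)) -> w != 0 ->
  (forall n : nat, lam (F n%:R) i j k l = zt n%:R * w) -> not_isolated H.
Proof.
move=> cRe cIm F0 FH w0 Fl; exists F; split => //.
destruct (classic (exists t, ~ hadamard_equiv (F t) H)) as [h|h]; first exact h.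
exfalso.
pose P (n : nat) (q : 'I_d * 'I_d * 'I_d * 'I_d) :=
  lam H q.1.1.1 q.1.1.2 q.1.2 q.2 == zt n%:R * w.
have hall n : exists q, P n q.
  have he : hadamard_equiv (F n%:R) H := NNPP _ (fun hn => h (ex_intro (fun t => ~ hadamard_equiv (F t) H) _ hn)).
  have [s [t E]] := @equiv_lam _ _ _ _ he.
  exists (((s^-1)%g i, (t^-1)%g j, (s^-1)%g k), (t^-1)%g l).
  by rewrite /P /= E !permKV Fl.
pose N := #|{: 'I_d * 'I_d * 'I_d * 'I_d}|.+1.
pose f (n : 'I_N) := odflt (i, j, k, l) [pick q | P n q].
have hf (n : 'I_N) : P n (f n).
  rewrite /f; case: pickP => [q //|hn].
  by have [q hq] := hall n; rewrite hn in hq.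
have finj : injective f.
  move=> n1 n2 e; have := hf n1; have := hf n2; rewrite /P e => /eqP -> /eqP.
  by move/(mulIf w0)/zt_inj_nat => /val_inj.
by have := leq_card f finj; rewrite card_ord ltnn.
Qed.



Lemma cont_Re {R : realType} (c : bool) (h : R[i]) :
  continuous (fun t : R => complex.Re (if c then zt t * h else h)).
Proof.
case: c; last by move=> t; exact: cvg_cst.
case: h => hr hi /= t.
have h1 := continuousM (s := xr) (t := fun=> hr) (x := t) (xr_cont t) (@cst_continuous R R hr t).
have h2 := continuousM (s := yr) (t := fun=> hi) (x := t) (yr_cont t) (@cst_continuous R R hi t).
exact: (continuousB h1 h2).
Qed.

Lemma cont_Im {R : realType} (c : bool) (h : R[i]) :
  continuous (fun t : R => complex.Im (if c then zt t * h else h)).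
Proof.
case: c; last by move=> t; exact: cvg_cst.
case: h => hr hi /= t.
have h1 := continuousM (s := xr) (t := fun=> hi) (x := t) (xr_cont t) (@cst_continuous R R hi t).
have h2 := continuousM (s := yr) (t := fun=> hr) (x := t) (yr_cont t) (@cst_continuous R R hr t).
exact: (continuousD h1 h2).
Qed.



Definition fam {R : realType} {d : nat} (H : 'M[R[i]]_d) (c : 'I_d -> 'I_d -> bool)
  (t : R) : 'M[R[i]]_d :=
  \matrix_(j, k) (if c j k then zt t * H j k else H j k).

Lemma fam_Re {R : realType} {d : nat} (H : 'M[R[i]]_d) c a b :
  continuous (fun t : R => complex.Re (fam H c t a b)).
Proof.
have -> : (fun t : R => complex.Re (fam H c t a b)) =
  (fun t => complex.Re (if c a b then zt t * H a b else H a b)).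
  by apply/funext => t; rewrite /fam mxE.
exact: cont_Re.
Qed.

Lemma fam_Im {R : realType} {d : nat} (H : 'M[R[i]]_d) c a b :
  continuous (fun t : R => complex.Im (fam H c t a b)).
Proof.
have -> : (fun t : R => complex.Im (fam H c t a b)) =
  (fun t => complex.Im (if c a b then zt t * H a b else H a b)).
  by apply/funext => t; rewrite /fam mxE.
exact: cont_Im.
Qed.

Lemma fam0 {R : realType} {d : nat} (H : 'M[R[i]]_d) c : fam H c 0 = H.
Proof. by apply/matrixP => j k; rewrite /fam mxE zt0 mul1r if_same. Qed.

Lemma norm1_zt {R : realType} (t : R) : `|zt t| = 1.
Proof.
apply/eqP; rewrite -(sqrp_eq1 (normr_ge0 _)) -conjc_mul_self zt_unit //.
Qed.

Lemma fam_unim {R : realType} {d : nat} (H : 'M[R[i]]_d) c t :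
  (forall i j, `|H i j| = 1) -> forall i j, `|fam H c t i j| = 1.
Proof.
move=> hu i j; rewrite /fam mxE; case: (c i j) => //.
by rewrite normrM norm1_zt hu mul1r.
Qed.

Lemma split_sum {R : realType} {d : nat} (P : pred 'I_d) (c : R[i]) (al be : 'I_d -> R[i]) :
  c != 0 -> (forall j, be j = (if P j then - c else c) * al j) ->
  \sum_j al j = 0 -> \sum_j be j = 0 ->
  [/\ \sum_(j | P j) al j = 0, \sum_(j | ~~ P j) al j = 0,
      \sum_(j | P j) be j = 0 & \sum_(j | ~~ P j) be j = 0].
Proof.
move=> c0 hb ha hbe.
have eP : \sum_(j | P j) be j = - c * \sum_(j | P j) al j.
  by rewrite mulr_sumr; apply: eq_bigr => j pj; rewrite hb pj.
have eN : \sum_(j | ~~ P j) be j = c * \sum_(j | ~~ P j) al j.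
  by rewrite mulr_sumr; apply: eq_bigr => j pj; rewrite hb (negbTE pj).
rewrite (bigID P) /= in ha; rewrite (bigID P) /= eP eN in hbe.
set A := \sum_(j | P j) al j; set B := \sum_(j | ~~ P j) al j.
rewrite -/A -/B in ha hbe.
have hBA : c * (B - A) = 0 by rewrite -hbe; ring.
move/eqP: hBA; rewrite mulf_eq0 (negbTE c0) /= subr_eq0 => /eqP eBA.
have hA : A *+ 2 = 0.
  by move: ha; rewrite mulr2n eBA.
move/eqP: hA; rewrite mulrn_eq0 /= => /eqP hA.
have hB : B = 0 by rewrite eBA.
rewrite /A /B in hA hB.
by split; [exact hA | exact hB | rewrite eP hA mulr0 | rewrite eN hB mulr0].
Qed.

Lemma split_nonempty {R : realType} {d : nat} (P : pred 'I_d) (c : R[i]) :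
  c != 0 -> (0 < d)%N -> \sum_(j < d) (if P j then - c else c) = 0 ->
  (exists i, P i) /\ (exists k, ~~ P k).
Proof.
move=> c0 d0 hs; split.
  case: (pickP P) => [i pi|hn]; first by exists i.
  move: hs; rewrite (eq_bigr (fun=> c)) => [|j _]; last by rewrite hn.
  by rewrite sumr_const card_ord => /eqP; rewrite mulrn_eq0 (negbTE c0) orbF => /eqP d00; by rewrite d00 in d0.
case: (pickP (predC P)) => [i pi|hn]; first by exists i.
move: hs; rewrite (eq_bigr (fun=> - c)) => [|j _]; last first.
  by have := hn j; rewrite /= => /negbFE ->.
by rewrite sumr_const card_ord => /eqP; rewrite mulrn_eq0 oppr_eq0 (negbTE c0) orbF => /eqP d00; by rewrite d00 in d0.
Qed.

Lemma row_orth {R : realType} {d : nat} (H : 'M[R[i]]_d) :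
  complex_hadamard H -> forall a b, a != b -> \sum_k conjc (H a k) * H b k = 0.
Proof.
case=> hu ho a b ab.
have d0 : (d%:R : R[i]) != 0 by rewrite pnatr_eq0 -lt0n (leq_ltn_trans _ (ltn_ord a)).
pose A : 'M[R[i]]_d := \matrix_(i, j) ((d%:R)^-1 * conjc (H j i)).
have hA : A *m H = 1%:M.
  apply/matrixP => i j; rewrite !mxE.
  under eq_bigr do rewrite mxE -mulrA.
  rewrite -mulr_sumr; case: eqP => [->|/eqP ij].
    rewrite (eq_bigr (fun=> 1)) => [|k _]; last exact: unim (hu k j).
    by rewrite sumr_const card_ord mulVf.
  by rewrite ho // mulr0.
have := mulmx1C hA => /matrixP /(_ b a); rewrite !mxE eq_sym (negbTE ab) /=.
under eq_bigr do rewrite mxE mulrCA.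
rewrite -mulr_sumr => /eqP; rewrite mulf_eq0 invr_eq0 (negbTE d0) /= => /eqP e.
transitivity (\sum_k H b k * conjc (H a k)); last exact: e.
by apply: eq_bigr => k _; rewrite mulrC.
Qed.



Lemma neq0_unim {R : realType} {c : R[i]} : `|c| = 1 -> c != 0.
Proof. by move=> h; apply/eqP => e; move: h; rewrite e normr0 => /eqP; rewrite eq_sym oner_eq0. Qed.

Lemma oppr_neq_self {R : realType} (c : R[i]) : c != 0 -> (- c == c) = false.
Proof.
move=> c0; apply/negbTE/eqP => e.
have : c *+ 2 = 0 by rewrite mulr2n -{1}e addNr.
by move/eqP; rewrite mulrn_eq0 /= (negbTE c0).
Qed.

Lemma third_index (d : nat) (a b : 'I_d) : (2 < d)%N -> exists q : 'I_d, (q != a) && (q != b).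
Proof.
move=> d2; case: (pickP (fun q : 'I_d => (q != a) && (q != b))) => [q hq|hn]; first by exists q.
exfalso.
have h0 := hn (Ordinal (ltn_trans (isT : (0 < 2)%N) d2)).
have h1 := hn (Ordinal (ltn_trans (isT : (1 < 2)%N) d2)).
have h2 := hn (Ordinal d2).
move: h0 h1 h2 => /= /negbT; rewrite negb_and !negbK => /orP [] /eqP e0;
  move/negbT; rewrite negb_and !negbK => /orP [] /eqP e1;
  move/negbT; rewrite negb_and !negbK => /orP [] /eqP e2;
  move: e0 e1 e2 => /(congr1 val) /= e0 /(congr1 val) /= e1 /(congr1 val) /= e2; lia.
Qed.

Lemma sum_cases {R : realType} {d : nat} (P : pred 'I_d) (k : R[i]) (g : 'I_d -> R[i]) :
  \sum_(j | P j) g j = 0 -> \sum_(j | ~~ P j) g j = 0 ->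
  \sum_j (if P j then k * g j else g j) = 0.
Proof.
move=> h1 h2; rewrite (bigID P) /=.
rewrite (eq_bigr (fun j => k * g j)) => [|j ->] //.
rewrite (eq_bigr (fun j => g j)) => [|j /negbTE ->] //.
by rewrite -mulr_sumr h1 h2 mulr0 addr0.
Qed.

Lemma col_case {R : realType} (d : nat) (H : 'M[R[i]]_d) (a b : 'I_d) (c0 : R[i]) :
  (2 < d)%N -> complex_hadamard H -> a != b -> `|c0| = 1 ->
  (forall j, conjc (H j a) * H j b = c0 \/ conjc (H j a) * H j b = - c0) ->
  not_isolated H.
Proof.
move=> d2 hH ab hc hX; have [hu ho] := hH.
have c0n := neq0_unim hc.
pose P : pred 'I_d := fun j => conjc (H j a) * H j b != c0.
have hX' j : conjc (H j a) * H j b = if P j then - c0 else c0.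
  rewrite /P; case: (hX j) => ->; first by rewrite eqxx.
  by rewrite oppr_neq_self.
have he j : H j b = (if P j then - c0 else c0) * H j a.
  by rewrite -hX' mulrC mulrA (mulrC (H j a)) (unim (hu j a)) mul1r.
have [[iP hiP] [kN hkN]] : (exists i, P i) /\ (exists k, ~~ P k).
  apply: (split_nonempty P c0 c0n); first exact: (leq_trans _ d2).
  by rewrite -[RHS](ho a b ab); apply: eq_bigr => j _; rewrite hX'.
have [q /andP [qa qb]] := third_index d a b d2.
pose cond := fun j k : 'I_d => ((k == a) || (k == b)) && P j.
apply: (@fam_ni _ d H (fam H cond) iP a kN q
  (H iP a * conjc (H kN a) * H kN q * conjc (H iP q))).
- exact: fam_Re.
- exact: fam_Im.
- exact: fam0.
- move=> t; split; first exact: fam_unim.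
  move=> p r pr; rewrite /fam.
  under eq_bigr do rewrite !mxE.
  rewrite /cond.
  have zz := zt_unit t.
  have hout (x : 'I_d) : x != a -> x != b ->
     [/\ \sum_(j | P j) conjc (H j a) * H j x = 0, \sum_(j | ~~ P j) conjc (H j a) * H j x = 0,
      \sum_(j | P j) conjc (H j b) * H j x = 0 & \sum_(j | ~~ P j) conjc (H j b) * H j x = 0].
    move=> xa xb; apply: (split_sum P (conjc c0)).
    - by rewrite conjc_eq0.
    - by move=> j; rewrite he !rmorphM /= mulrA; case: (P j); rewrite ?rmorphN.
    - by apply: ho; rewrite eq_sym.
    - by apply: ho; rewrite eq_sym.
  have hout' (x : 'I_d) : x != a -> x != b ->
     [/\ \sum_(j | P j) conjc (H j x) * H j a = 0, \sum_(j | ~~ P j) conjc (H j x) * H j a = 0,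
      \sum_(j | P j) conjc (H j x) * H j b = 0 & \sum_(j | ~~ P j) conjc (H j x) * H j b = 0].
    move=> xa xb; apply: (split_sum P c0) => //.
    - by move=> j; rewrite he mulrCA.
    - exact: ho.
    - exact: ho.
  case pab: ((p == a) || (p == b)); case rab: ((r == a) || (r == b)) => /=.
  + rewrite -[RHS](ho p r pr); apply: eq_bigr => j _; case: (P j) => //.
    by rewrite rmorphM /= mulrACA zz mul1r.
  + move/negbT: rab; rewrite negb_or => /andP [ra rb].
    have [h1 h2 h3 h4] := hout r ra rb.
    rewrite -[RHS](sum_cases P (conjc (zt t)) (fun j => conjc (H j p) * H j r)).
    * by apply: eq_bigr => j _; case: (P j) => //; rewrite rmorphM /= mulrA.
    * by case/orP: pab => /eqP ->.
    * by case/orP: pab => /eqP ->.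
  + move/negbT: pab; rewrite negb_or => /andP [pa pb].
    have [h1 h2 h3 h4] := hout' p pa pb.
    rewrite -[RHS](sum_cases P (zt t) (fun j => conjc (H j p) * H j r)).
    * by apply: eq_bigr => j _; case: (P j) => //; rewrite mulrCA.
    * by case/orP: rab => /eqP ->.
    * by case/orP: rab => /eqP ->.
  + rewrite -[RHS](ho p r pr); apply: eq_bigr => j _; by case: (P j).
- rewrite !mulf_neq0 ?conjc_eq0 //; apply: neq0_unim; exact: hu.
- move=> n; rewrite /lam /fam !mxE /cond eqxx hiP (negbTE hkN) /= (negbTE qa) (negbTE qb) /=.
  by rewrite !mulrA.
Qed.



Lemma sum_ab {R : realType} {d : nat} (a b : 'I_d) (k : R[i]) (g : 'I_d -> R[i]) :
  a != b -> \sum_j g j = 0 -> g a + g b = 0 ->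
  \sum_j (if (j == a) || (j == b) then k * g j else g j) = 0.
Proof.
move=> ab hs hab.
rewrite (bigD1 a) //= (bigD1 b) 1?eq_sym //= !eqxx orbT /=.
rewrite (bigD1 a) //= (bigD1 b) 1?eq_sym //= in hs.
rewrite (eq_bigr g) => [|j /andP [ja jb]]; last by rewrite (negbTE ja) (negbTE jb).
have -> : \sum_(i < d | (i != a) && (i != b)) g i = 0.
  move: hs; set S := \sum_(i < d | _) g i => e.
  transitivity (g a + (g b + S) - (g a + g b)); first ring.
  by rewrite e hab subrr.
by rewrite addr0 -mulrDr hab mulr0.
Qed.

Lemma row_case {R : realType} (d : nat) (H : 'M[R[i]]_d) (a b : 'I_d) (c0 : R[i]) :
  (2 < d)%N -> complex_hadamard H -> a != b -> `|c0| = 1 ->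
  (forall k, conjc (H a k) * H b k = c0 \/ conjc (H a k) * H b k = - c0) ->
  not_isolated H.
Proof.
move=> d2 hH ab hc hX; have [hu ho] := hH.
have c0n := neq0_unim hc.
have cc := unim hc.
pose P : pred 'I_d := fun k => conjc (H a k) * H b k != c0.
have hX' k : conjc (H a k) * H b k = if P k then - c0 else c0.
  rewrite /P; case: (hX k) => ->; first by rewrite eqxx.
  by rewrite oppr_neq_self.
have he k : H b k = (if P k then - c0 else c0) * H a k.
  by rewrite -hX' mulrC mulrA (mulrC (H a k)) (unim (hu a k)) mul1r.
have [[iP hiP] [kN hkN]] : (exists i, P i) /\ (exists k, ~~ P k).
  apply: (split_nonempty P c0 c0n); first exact: (leq_trans _ d2).
  by rewrite -[RHS](row_orth H hH a b ab); apply: eq_bigr => j _; rewrite hX'.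
have [r /andP [ra rb]] := third_index d a b d2.
pose cond := fun j k : 'I_d => ((j == a) || (j == b)) && P k.
apply: (@fam_ni _ d H (fam H cond) a iP r kN
  (H a iP * conjc (H r iP) * H r kN * conjc (H a kN))).
- exact: fam_Re.
- exact: fam_Im.
- exact: fam0.
- move=> t; split; first exact: fam_unim.
  move=> p q pq; rewrite /fam.
  under eq_bigr do rewrite !mxE.
  rewrite /cond.
  have zz := zt_unit t.
  have gab : P p != P q -> conjc (H a p) * H a q + conjc (H b p) * H b q = 0.
    move=> hpq; rewrite !he rmorphM /=.
    set e1 := (if P p then - c0 else c0); set e2 := (if P q then - c0 else c0).
    set x := conjc (H a p); set y := H a q.
    transitivity (x * y * (1 + conjc e1 * e2)); first by ring.
    rewrite /e1 /e2.
    by move: hpq; case: (P p); case: (P q) => //= _; rewrite ?rmorphN /= ?mulNr ?mulrN ?opprK cc subrr mulr0.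
  case ep: (P p); case eq: (P q).
  + rewrite -[RHS](ho p q pq); apply: eq_bigr => j _; rewrite !andbT.
    by case: ((j == a) || (j == b)); rewrite // rmorphM /= mulrACA zz mul1r.
  + rewrite -[RHS](sum_ab a b (conjc (zt t)) (fun j => conjc (H j p) * H j q) ab (ho p q pq) (gab _)); last by rewrite ep eq.
    apply: eq_bigr => j _; rewrite andbT andbF.
    by case: ((j == a) || (j == b)); rewrite // rmorphM /= mulrA.
  + rewrite -[RHS](sum_ab a b (zt t) (fun j => conjc (H j p) * H j q) ab (ho p q pq) (gab _)); last by rewrite ep eq.
    apply: eq_bigr => j _; rewrite andbT andbF.
    by case: ((j == a) || (j == b)); rewrite // mulrCA.
  + rewrite -[RHS](ho p q pq); apply: eq_bigr => j _; by rewrite !andbF.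
- rewrite !mulf_neq0 ?conjc_eq0 //; apply: neq0_unim; exact: hu.
- move=> n; rewrite /lam /fam !mxE /cond eqxx hiP (negbTE hkN) /= (negbTE ra) (negbTE rb) /=.
  by rewrite !mulrA.
Qed.



Lemma pm1_transfer {R : realType} (X Y c : R[i]) :
  X = c * Y -> (Y = 1 \/ Y = -1) -> X = c \/ X = - c.
Proof. by move=> -> [] ->; [left; rewrite mulr1 | right; rewrite mulrN1]. Qed.

Theorem corollary1 (R : realType) (d : nat) (H : 'M[R[i]]_d) :
  (2 < d)%N ->
  complex_hadamard H ->
  (exists H' : 'M[R[i]]_d, dephased_form H H' /\
     ((exists a b, ER_pair_cols H' a b) \/ (exists a b, ER_pair_rows H' a b))) ->
  not_isolated H.
Proof.
move=> d2 hH [H' [[[u [v [hu hv eH']]] _] hER]].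
have ent j k : H' j k = u 0 j * H j k * v 0 k.
  by rewrite eH' mul_mx_diag mxE mul_diag_mx mxE.
case: hER => [[a [b [ab hab]]] | [a [b [ab hab]]]].
- apply: (@col_case _ d H a b (v 0 a * conjc (v 0 b)) d2 hH ab).
  + by rewrite normrM normcJ hv hv mulr1.
  + move=> j; apply: (pm1_transfer _ _ _ _ (hab j)).
    rewrite !ent !rmorphM /=.
    have uj := unim (hu j); have va := unim (hv a); have vb := unim (hv b).
    set x := conjc (H j a); set y := H j b.
    transitivity ((conjc (u 0 j) * u 0 j) * (conjc (v 0 a) * v 0 a) * (conjc (v 0 b) * v 0 b) * (x * y)).
      by rewrite uj va vb !mul1r.
    by ring.
- apply: (@row_case _ d H a b (u 0 a * conjc (u 0 b)) d2 hH ab).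
  + by rewrite normrM normcJ hu hu mulr1.
  + move=> k; apply: (pm1_transfer _ _ _ _ (hab k)).
    rewrite !ent !rmorphM /=.
    have vk := unim (hv k); have ua := unim (hu a); have ub := unim (hu b).
    set x := conjc (H a k); set y := H b k.
    transitivity ((conjc (v 0 k) * v 0 k) * (conjc (u 0 a) * u 0 a) * (conjc (u 0 b) * u 0 b) * (x * y)).
      by rewrite vk ua ub !mul1r.
    by ring.
Qed.
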